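(* Let $G$ be a linear system with generalized state-space realization $\dot{x}=Ax+\hat{A}w+Bu$, $w=\bar{A}x+\tilde{A}w+\bar{B}u$, $y=Cx+\bar{C}w+Du$ (with $I-\tilde{A}$ invertible) and complete computational structure $\mathcal{C}$. Then the subsystem structure $\mathcal{S}$ of $G$ is unique; equivalently, there is a unique admissible partition of the vertex set $V(\mathcal{C})$ of maximal cardinality.
   Context: Here $u\in\mathbb{R}^m$ are inputs, $x\in\mathbb{R}^n$ states, $w\in\mathbb{R}^l$ auxiliary variables, $y\in\mathbb{R}^p$ outputs. The complete computational structure $\mathcal{C}$ is the directed graph with one vertex for each input $u_i$, each state (vertex $f_j$, producing $x_j$), each auxiliary variable (vertex $g_k$, producing $w_k$) and each output (vertex $h_r$, producing $y_r$); there is an edge from vertex $a$ to vertex $b$, labelled by the variable produced by $a$, whenever the function defining the variable associated with $b$ depends on the variable produced by $a$ (for linear equations: the corresponding coefficient is nonzero). Inputs and outputs are manifest variables; states are hidden; an auxiliary variable is hidden unless it is manifest, i.e. passed directly out as an output (e.g. $y_r=w_k$). A partition of $V(\mathcal{C})$ is admissible if every edge of $\mathcal{C}$ between distinct components of the partition represents a manifest (not hidden) variable. The subsystem structure $\mathcal{S}$ is the condensation graph of $\mathcal{C}$ whose vertices $S_1,\dots,S_q$ are the components of an admissible partition of $V(\mathcal{C})$ of maximal cardinality, with an edge $(S_i,S_j)$ whenever $\mathcal{C}$ has an edge from some vertex of $S_i$ to some vertex of $S_j$; vertices are labelled by the transfer function of the associated subsystem and edges by the associated variable. *)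

(* Defs.v *)
From HB Require Import structures.
From mathcomp Require Import all_boot all_order all_algebra.
Set Implicit Arguments. Unset Strict Implicit. Unset Printing Implicit Defensive.
Import GRing.Theory.
Local Open Scope ring_scope.

(* Generalized state-space realization
     xdot = A x + Ah w + B u,
     w    = Ab x + At w + Bb u,
     y    = C x + Cb w + D u
   with u in R^m, x in R^n, w in R^l, y in R^p. *)
Record gss (R : fieldType) (m n l p : nat) := Gss {
  sA  : 'M[R]_(n, n); sAh : 'M[R]_(n, l); sB  : 'M[R]_(n, m);
  sAb : 'M[R]_(l, n); sAt : 'M[R]_(l, l); sBb : 'M[R]_(l, m);
  sC  : 'M[R]_(p, n); sCb : 'M[R]_(p, l); sD  : 'M[R]_(p, m) }.

(* Vertices of the complete computational structure:
   inl (inl (inl i)) = input u_i, inl (inl (inr j)) = state vertex f_j,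
   inl (inr k) = auxiliary vertex g_k, inr r = output vertex h_r. *)
Definition vtx (m n l p : nat) : finType := ('I_m + 'I_n + 'I_l + 'I_p)%type.

Section CCS.
Variables (R : fieldType) (m n l p : nat) (S : gss R m n l p).

(* coefficient of the variable produced by [a] in the equation defining the
   variable associated with [b] *)
Definition coef (b a : vtx m n l p) : R :=
  match b with
  | inl (inl (inl _)) => 0
  | inl (inl (inr j)) =>
      match a with
      | inl (inl (inl i)) => sB S j i
      | inl (inl (inr j')) => sA S j j'
      | inl (inr k) => sAh S j k
      | inr _ => 0
      end
  | inl (inr k) =>
      match a with
      | inl (inl (inl i)) => sBb S k i
      | inl (inl (inr j)) => sAb S k j
      | inl (inr k') => sAt S k k'
      | inr _ => 0
      end
  | inr r =>
      match a with
      | inl (inl (inl i)) => sD S r i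
      | inl (inl (inr j)) => sC S r j
      | inl (inr k) => sCb S r k
      | inr _ => 0
      end
  end.

Definition ccs_edge (a b : vtx m n l p) : bool := coef b a != 0.

(* auxiliary variable w_k is manifest: some output is y_r = w_k *)
Definition aux_manifest (k : 'I_l) : bool :=
  [exists r : 'I_p, [&& row r (sC S) == 0, row r (sD S) == 0 &
                        row r (sCb S) == delta_mx 0 k]].

Definition manifest (a : vtx m n l p) : bool :=
  match a with
  | inl (inl (inl _)) => true
  | inl (inl (inr _)) => false
  | inl (inr k) => aux_manifest k
  | inr _ => true
  end.

Definition admissible (P : {set {set vtx m n l p}}) : bool :=
  partition P [set: vtx m n l p] &&
  [forall a, forall b,
     (ccs_edge a b && (pblock P a != pblock P b)) ==> manifest a].

Definition max_admissible (P : {set {set vtx m n l p}}) : Prop :=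
  admissible P /\
  forall Q : {set {set vtx m n l p}}, admissible Q -> (#|Q| <= #|P|)%N.

End CCS.

(* Main.v *)
Require Import Defs.
From mathcomp Require Import all_boot all_order all_algebra.
Local Open Scope ring_scope.

Set Implicit Arguments.
Section Abs.
Variables (T : finType) (h : rel T).
Definition es : rel T := fun x y => h x y || h y x.
Definition cc := connect es.
Definition P0 := equivalence_partition cc [set: T].
Definition adm (Q : {set {set T}}) :=
  partition Q [set: T] /\ forall a b, h a b -> pblock Q a = pblock Q b.

Lemma cc_equiv : {in [set: T] & &, equivalence_rel cc}.
Proof.
move=> x y z _ _ _; split; first exact: connect0.
move=> Hxy; apply/idP/idP => H.
- apply: connect_trans _ H; rewrite /cc sym_connect_sym //.
  by move=> a b; rewrite /es orbC.
- exact: connect_trans Hxy H.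
Qed.

Lemma P0_part : partition P0 [set: T].
Proof. exact: equivalence_partitionP cc_equiv. Qed.

Lemma P0_mem x y : (y \in pblock P0 x) = cc x y.
Proof. by rewrite (pblock_equivalence_partition cc_equiv) ?inE. Qed.

Lemma part_imset (Q : {set {set T}}) : partition Q [set: T] ->
  Q = pblock Q @: [set: T].
Proof.
move=> /and3P[/eqP cov ti n0]; apply/setP => B; apply/idP/imsetP.
- move=> BQ; have /set0Pn[x xB] : B != set0.
    by apply: contraNneq n0 => <-.
  by exists x; rewrite ?inE // (def_pblock ti BQ xB).
- by move=> [x _ ->]; apply: pblock_mem; rewrite cov inE.
Qed.

Lemma adm_cc Q x y : adm Q -> cc x y -> pblock Q x = pblock Q y.
Proof.
move=> [_ HQ] /connectP [s]; elim: s x => [|z s IH] x /=.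
  by move=> _ ->.
move=> /andP[exz ps] ly; rewrite -(IH z ps ly).
by case/orP: exz => [/HQ|/HQ ->].
Qed.

Lemma P0_adm : adm P0.
Proof.
split; first exact: P0_part.
have [_ ti _] := and3P P0_part.
move=> a b hab; apply: esym; apply: same_pblock => //.
by rewrite P0_mem; apply: connect1; rewrite /es hab.
Qed.

Lemma adm_card Q : adm Q -> (#|Q| <= #|P0|)%N /\ (#|Q| = #|P0| -> Q = P0).
Proof.
move=> aQ; have [pQ _] := aQ.
have [_ tiQ _] := and3P pQ; have [_ ti0 _] := and3P P0_part.
set g := fun B : {set T} =>
  if [pick z in B] is Some z then pblock Q z else set0.
have gE x : pblock Q x = g (pblock P0 x).
  rewrite /g; case: pickP => [z zB|/(_ x)].
    by apply: adm_cc => //; rewrite -P0_mem.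
  by rewrite P0_mem /cc connect0.
have QE : Q = g @: P0.
  by rewrite {1}(@part_imset Q pQ) (@part_imset P0 P0_part) -imset_comp; apply: eq_imset.
split; first by rewrite QE leq_imset_card.
move=> Hc; have /imset_injP inj : #|g @: P0| == #|P0| by rewrite -QE Hc.
rewrite (@part_imset Q pQ) (@part_imset P0 P0_part); apply: eq_imset => x.
have covQ z : z \in cover Q by have /and3P[/eqP -> _ _] := pQ; rewrite inE.
have cov0 z : z \in cover P0 by have /and3P[/eqP -> _ _] := P0_part; rewrite inE.
apply/setP => y; apply/idP/idP => H.
- have e : pblock Q y = pblock Q x := same_pblock tiQ H.
  rewrite !gE in e; have e2 := inj _ _ (pblock_mem (cov0 y)) (pblock_mem (cov0 x)) e.
  by rewrite -e2 mem_pblock.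
- rewrite P0_mem in H; rewrite (adm_cc x y aQ H) mem_pblock //.
Qed.
End Abs.

Lemma adm_iff (R : fieldType) (m n l p : nat) (S : gss R m n l p) Q :
  admissible S Q <->
  adm (fun a b => ccs_edge S a b && ~~ manifest S a) Q.
Proof.
rewrite /admissible /adm; split.
- move=> /andP[pQ /forallP H]; split => // a b /andP[e nm].
  have /forallP/(_ b) := H a; rewrite e /= => /implyP H2.
  by apply/eqP; apply: contraNT nm => ne; apply: H2.
- move=> [pQ H]; apply/andP; split => //; apply/forallP => a; apply/forallP => b.
  apply/implyP => /andP[e ne]; apply: contraNT ne => nm.
  by rewrite (H a b) ?eqxx // e nm.
Qed.

Theorem lemma2 (R : fieldType) (m n l p : nat) (S : gss R m n l p) :
  (1%:M - sAt S) \in unitmx ->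
  exists P : {set {set vtx m n l p}},
    max_admissible S P /\
    forall Q : {set {set vtx m n l p}}, max_admissible S Q -> Q = P.
Proof.
move=> _; set h := fun a b => ccs_edge S a b && ~~ manifest S a.
exists (@P0 _ h); split.
  split; first by apply/adm_iff; apply: P0_adm.
  by move=> Q /adm_iff /adm_card [].
move=> Q [/adm_iff aQ HQ]; have [le eq] := adm_card aQ; apply: eq.
apply/eqP; rewrite eqn_leq le /=; apply: HQ; apply/adm_iff; apply: P0_adm.
Qed.
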